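(* Let $\mathcal{H}$ be a hypothesis class and $k\ge0$, $m\ge1$ integers. (i) $\mathrm{ELdim}(\mathcal{H},0)\ge m$ if and only if there exist $x\in\mathcal{X}$ and $y\in\{-1,+1\}$ such that $x\in\mathrm{DIS}(\mathcal{H})$ and $\mathrm{ELdim}(\mathcal{H}[(x,y)],0)\ge m-1$. (ii) If $k\ge1$, then $\mathrm{ELdim}(\mathcal{H},k)\ge m$ if and only if there exist $x\in\mathcal{X}$ and $y\in\{-1,+1\}$ such that both $\mathrm{ELdim}(\mathcal{H}[(x,y)],k)\ge m-1$ and $\mathrm{ELdim}(\mathcal{H}[(x,-y)],k-1)\ge m-1$.
   Context: Hypotheses are maps $\mathcal{X}\to\{-1,+1\}$; $\mathcal{H}[(x,y)]=\{h\in\mathcal{H}:h(x)=y\}$; $x\in\mathrm{DIS}(\mathcal{H})$ means both $\mathcal{H}[(x,+1)]$ and $\mathcal{H}[(x,-1)]$ are nonempty. Extended mistake tree w.r.t. $\mathcal{H}$: a finite full binary tree (possibly a single leaf) in which each internal node $v$ is labeled by $x_v\in\mathcal{X}$ and has two solid downward edges, to its left child (label $-1$) and right child (label $+1$), plus one dashed downward edge to one of its two children; each leaf is labeled by some $h\in\mathcal{H}$ with $h(x_v)$ equal to the direction label at every internal node $v$ on the root-to-leaf path. A root-to-leaf path chooses at each internal node one downward edge; its length is its number of edges. The tree is $(k,m)$-difficult if every root-to-leaf path using at most $k$ solid edges has length at least $m$. $\mathrm{ELdim}(\mathcal{H},k)$ is the supremum of $m$ such that a $(k,m)$-difficult extended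 mistake tree w.r.t. $\mathcal{H}$ exists (for empty $\mathcal{H}$ no tree exists and $\mathrm{ELdim}<0$). *)

(* Defs.v *)
From mathcomp Require Import all_boot.
Set Implicit Arguments. Unset Strict Implicit. Unset Printing Implicit Defensive.

(* Labels {-1,+1} are encoded as bool: false = -1, true = +1; -y is negb y. *)
Definition hclass (X : Type) := (X -> bool) -> Prop.

Definition restrict X (H : hclass X) (x : X) (y : bool) : hclass X :=
  fun h => H h /\ h x = y.

Definition DIS X (H : hclass X) (x : X) : Prop :=
  (exists h, restrict H x true h) /\ (exists h, restrict H x false h).

(* Finite full binary trees: internal nodes carry x_v and the direction
   (false = left child / label -1, true = right child / label +1) of the
   dashed edge; leaves carry a hypothesis. *)
Inductive emtree (X : Type) : Type :=
| ELeaf (h : X -> bool)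
| ENode (x : X) (dashed : bool) (l r : emtree X).

Fixpoint is_emtree X (H : hclass X) (t : emtree X) : Prop :=
  match t with
  | ELeaf h => H h
  | ENode x _ l r => is_emtree (restrict H x false) l /\ is_emtree (restrict H x true) r
  end.

Inductive emt_path X : emtree X -> nat -> nat -> Prop :=
| path_leaf h : emt_path (ELeaf h) 0 0
| path_dashed x d l r s n :
    emt_path (if d then r else l) s n -> emt_path (ENode x d l r) s n.+1
| path_left x d l r s n :
    emt_path l s n -> emt_path (ENode x d l r) s.+1 n.+1
| path_right x d l r s n :
    emt_path r s n -> emt_path (ENode x d l r) s.+1 n.+1.

Definition difficult X (k m : nat) (t : emtree X) : Prop :=
  forall s n, emt_path t s n -> s <= k -> m <= n.

(* ELdim(H,k) >= m, for a natural number m: since (k,m)-difficulty is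
   downward closed in m, the supremum of the admissible m is >= m iff a
   (k,m)-difficult extended mistake tree w.r.t. H exists.  For m = 0 this
   says that some tree exists (i.e. ELdim >= 0, H nonempty). *)
Definition ELdim_ge X (H : hclass X) (k m : nat) : Prop :=
  exists t : emtree X, is_emtree H t /\ difficult k m t.

(* Main.v *)
Require Import Defs.
From mathcomp Require Import all_boot.
From mathcomp Require Import zify.
Set Implicit Arguments. Unset Strict Implicit.

Lemma emt_nonempty X (H : hclass X) t : is_emtree H t -> exists h, H h.
Proof.
elim: t H => [h|x d l IHl r IHr] H /=; first by move=> Hh; exists h.
by move=> [/IHl [h [Hh _]] _]; exists h.
Qed.

Lemma node_ok X (H : hclass X) x y t1 t2 :
  is_emtree (restrict H x y) t1 -> is_emtree (restrict H x (~~ y)) t2 ->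
  is_emtree H (ENode x y (if y then t2 else t1) (if y then t1 else t2)).
Proof. by case: y => /=; tauto. Qed.

Lemma node_diff X k m (x : X) y t1 t2 :
  (forall s n, emt_path t1 s n -> s <= k -> m <= n.+1) ->
  (forall s n, emt_path t2 s n -> s.+1 <= k -> m <= n.+1) ->
  difficult k m (ENode x y (if y then t2 else t1) (if y then t1 else t2)).
Proof.
move=> H1 H2 s n P Hs; case: y P => P; inversion P; subst;
  match goal with Q : emt_path _ _ _ |- _ =>
    first [apply: (H1 _ _ Q) | apply: (H2 _ _ Q)] end; lia.
Qed.

Lemma diff_dashed X k m (x : X) d l r :
  difficult k m (ENode x d l r) ->
  forall s n, emt_path (if d then r else l) s n -> s <= k -> m <= n.+1.
Proof. by move=> D s n P Hs; apply: (D _ _ (path_dashed x P)). Qed.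

Lemma diff_solid X k m (x : X) d l r :
  difficult k m (ENode x d l r) ->
  forall s n, emt_path (if d then l else r) s n -> s.+1 <= k -> m <= n.+1.
Proof.
move=> D s n P Hs; case: d D P => D P.
- exact: (D _ _ (path_left x true r P)).
- exact: (D _ _ (path_right x false l P)).
Qed.

Lemma leaf_not X k m (h : X -> bool) : 1 <= m -> ~ difficult k m (ELeaf h).
Proof. by move=> hm D; have := D 0 0 (path_leaf h) (leq0n k); lia. Qed.

Theorem mainTheorem20 (X : Type) (H : hclass X) (k m : nat) (hm : 1 <= m) :
  (ELdim_ge H 0 m <->
     exists (x : X) (y : bool), DIS H x /\ ELdim_ge (restrict H x y) 0 (m - 1))
  /\
  (1 <= k ->
   (ELdim_ge H k m <->
     exists (x : X) (y : bool),
       ELdim_ge (restrict H x y) k (m - 1) /\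
       ELdim_ge (restrict H x (~~ y)) (k - 1) (m - 1))).
Proof.
split.
- split.
  + move=> [[h|x d l r] [E D]]; first by case: (leaf_not hm D).
    move: E => /= [El Er].
    have [hl Hl] := emt_nonempty El; have [hr Hr] := emt_nonempty Er.
    exists x, d; split; first by split; [exists hr | exists hl].
    exists (if d then r else l); split; first by case: d D El Er.
    move=> s n P Hs; have := diff_dashed D P Hs; lia.
  + move=> [x [y [[[h1 R1] [h0 R0]] [t [E D]]]]].
    have [h Hh] : exists h, restrict H x (~~ y) h by case: y E D => _ _; [exists h0 | exists h1].
    exists (ENode x y (if y then ELeaf h else t) (if y then t else ELeaf h)).
    split; first exact: node_ok.
    apply: node_diff; first by move=> s n P Hs; have := D _ _ P Hs; lia.
    by move=> s n P Hs; lia.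
- move=> hk; split.
  + move=> [[h|x d l r] [E D]]; first by case: (leaf_not hm D).
    move: E => /= [El Er].
    exists x, d; split.
    * exists (if d then r else l); split; first by case: d D El Er.
      move=> s n P Hs; have := diff_dashed D P Hs; lia.
    * exists (if d then l else r); split; first by case: d D El Er.
      move=> s n P Hs; have := diff_solid D P; lia.
  + move=> [x [y [[t1 [E1 D1]] [t2 [E2 D2]]]]].
    exists (ENode x y (if y then t2 else t1) (if y then t1 else t2)).
    split; first exact: node_ok.
    apply: node_diff.
    * by move=> s n P Hs; have := D1 _ _ P Hs; lia.
    * move=> s n P Hs; have : s <= k - 1 by lia.
      by move=> Hs'; have := D2 _ _ P Hs'; lia.
Qed.
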